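(* Let $p=2$, $a\in\mathbb{C}_2$, $a\ne0$, $A=|a|_2$, $f(x)=\frac{ax}{x^2+a}$, and $t_1=\sqrt{-2a}$, $t_2=-\sqrt{-2a}$. Then for every $0<r\le\frac{\sqrt A}{2\sqrt2}$, $$f(S_r(t_1)\setminus\mathcal P_2)\subseteq S_r(t_2),\qquad f(S_r(t_2)\setminus\mathcal P_2)\subseteq S_r(t_1).$$
   Context: $S_r(t)=\{x\in\mathbb{C}_2:|x-t|_2=r\}$. $f$ is defined on $\mathbb{C}_p\setminus\{\pm\sqrt{-a}\}$ and $f\circ f$ on $\mathbb{C}_p$ minus the points $\pm\sqrt{-a}$ and $\pm\sqrt{\frac{(-3\pm\sqrt5)a}{2}}$. $\mathcal P_2=\{x\in\mathbb{C}_p:\exists n\in\mathbb{N},\ f^n(x)\in\{\pm\sqrt{-a},\ \pm\sqrt{(-3\pm\sqrt5)a/2}\}\}$. The points $t_1,t_2$ form a $2$-cycle of $f$. *)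

(* Defs.v *)
From HB Require Import structures.
From mathcomp Require Import all_boot all_order all_algebra all_field.
Set Implicit Arguments. Unset Strict Implicit. Unset Printing Implicit Defensive.
Import Order.TTheory GRing.Theory Num.Theory.
Local Open Scope ring_scope.

Definition nonarch_abs (K : fieldType) (R : realFieldType) (v : K -> R) : Prop :=
  [/\ forall x, 0 <= v x,
      forall x, v x = 0 <-> x = 0,
      forall x y, v (x * y) = v x * v y
    & forall x y, v (x + y) <= Num.max (v x) (v y)].

Definition abs_complete (K : fieldType) (R : realFieldType) (v : K -> R) : Prop :=
  forall u : nat -> K,
    (forall e : R, 0 < e -> exists N : nat, forall m n : nat,
        (N <= m)%N -> (N <= n)%N -> v (u m - u n) < e) ->
    exists l : K, forall e : R, 0 < e -> exists N : nat, forall n : nat,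
        (N <= n)%N -> v (u n - l) < e.

Definition is_C2 (K : closedFieldType) (R : rcfType) (v : K -> R) : Prop :=
  [/\ [pchar K] =i pred0, nonarch_abs v, abs_complete v & v 2 = 2^-1].

Definition fmap (K : fieldType) (a x : K) : K := a * x / (x ^+ 2 + a).

Definition exc_point (K : fieldType) (a y : K) : Prop :=
  y ^+ 2 = - a \/ exists s : K, s ^+ 2 = 5 /\ 2 * y ^+ 2 = (-3 + s) * a.

Definition P2 (K : fieldType) (a x : K) : Prop :=
  exists n : nat, exc_point a (iter n (fmap a) x).

Definition sphere (K : fieldType) (R : realFieldType) (v : K -> R) (r : R) (t x : K) : Prop :=
  v (x - t) = r.

(* Main.v *)
Require Import Defs.
From HB Require Import structures.
From mathcomp Require Import all_boot all_order all_algebra all_field.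
From mathcomp Require Import ring lra.
Import Order.TTheory GRing.Theory Num.Theory.
Local Open Scope ring_scope.

Section Aux.
Variables (K : closedFieldType) (R : rcfType) (v : K -> R).
Hypothesis Hv : nonarch_abs v.
Hypothesis H2 : v 2 = 2^-1.

Lemma v_ge0 x : 0 <= v x. Proof. by case: Hv. Qed.
Lemma v_eq0 x : v x = 0 <-> x = 0. Proof. by case: Hv. Qed.
Lemma vM x y : v (x * y) = v x * v y. Proof. by case: Hv. Qed.
Lemma vD x y : v (x + y) <= Num.max (v x) (v y). Proof. by case: Hv. Qed.

Lemma v1 : v 1 = 1.
Proof.
have h := vM 1 1; rewrite mulr1 in h.
have hn : v 1 != 0 by apply/eqP => /v_eq0 /eqP; rewrite oner_eq0.
by apply: (mulfI hn); rewrite -h mulr1.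
Qed.

Lemma vN x : v (- x) = v x.
Proof.
have h := vM (-1) (-1); rewrite mulrNN mulr1 v1 in h.
have h0 := v_ge0 (-1).
have e : v (-1) = 1 by nra.
by rewrite -mulN1r vM e mul1r.
Qed.

Lemma vstrict x y : v y < v x -> v (x + y) = v x.
Proof.
move=> lt; apply/eqP; rewrite eq_le; apply/andP; split.
  by have := vD x y; rewrite (max_idPl (ltW lt)).
have := vD (x + y) (- y); rewrite addrK vN => le.
case: (leP (v x) (v (x + y))) => // h.
have : Num.max (v (x + y)) (v y) < v x by rewrite gt_max h lt.
by rewrite ltNge le.
Qed.

Lemma v3 : v 3 = 1.
Proof.
have -> : (3 : K) = 1 + 2 by [].
rewrite vstrict ?v1 // H2 invf_lt1 //; lra.
Qed.

Lemma vinv x : x != 0 -> v (x^-1) = (v x)^-1.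
Proof.
move=> nz; have h := vM x x^-1; rewrite mulfV // v1 in h.
have hx : v x != 0 by apply/eqP => /v_eq0 /eqP; rewrite (negbTE nz).
by apply: (mulfI hx); rewrite -h mulfV.
Qed.

Lemma key (a t x : K) (r : R) (ha : a != 0) (ht : t ^+ 2 = - (2 * a))
  (hr0 : 0 < r) (hr : r <= Num.sqrt (v a) / (2 * Num.sqrt 2)) :
  v (x - t) = r -> v (fmap a x - - t) = r.
Proof.
move=> hx; set h := x - t.
have xE : x = t + h by rewrite /h addrC subrK.
set A := v a. set T := v t.
have A0 : 0 < A.
  rewrite lt_def v_ge0 andbT; apply/eqP => /v_eq0 /eqP; by rewrite (negbTE ha).
have T0 := v_ge0 t.
have TA : T ^+ 2 = A / 2.
  by rewrite expr2 -vM -expr2 ht vN vM H2 /A mulrC.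
have q0 : 0 < Num.sqrt (2 : R) by rewrite sqrtr_gt0; lra.
have q2 : Num.sqrt (2 : R) ^+ 2 = 2 by rewrite sqr_sqrtr //; lra.
have s2 : Num.sqrt A ^+ 2 = A by rewrite sqr_sqrtr // ltW.
have s0 := sqrtr_ge0 A.
have r8 : r ^+ 2 * 8 <= A.
  have : r * (2 * Num.sqrt 2) <= Num.sqrt A by rewrite -ler_pdivlMr ?mulr_gt0 //.
  move=> le; rewrite -s2.
  have : (r * (2 * Num.sqrt 2)) ^+ 2 <= Num.sqrt A ^+ 2.
    by rewrite ler_sqr // ?nnegrE // mulr_ge0 ?mulr_ge0 // ltW.
  rewrite exprMn (exprMn 2) q2; nra.
have Tr : T * r <= A / 4.
  have : (T * r) ^+ 2 <= (A/4) ^+ 2 by rewrite exprMn TA; nra.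
  rewrite ler_sqr ?nnegrE //; last by nra.
  by rewrite mulr_ge0 // ltW.
have Tr0 : 0 <= T * r by rewrite mulr_ge0 // ltW.
set D := - a + 2 * t * h + h ^+ 2.
set Nm := h * (-3 * a + t * h).
have DE : x ^+ 2 + a = D.
  rewrite xE /D; transitivity (t ^+ 2 + 2 * t * h + h ^+ 2 + a); first by ring.
  rewrite ht; ring.
have NE : a * x + t * (x ^+ 2 + a) = Nm.
  rewrite xE /Nm; transitivity (t * t ^+ 2 + 2 * t * a + a * h + 2 * t ^+ 2 * h + t * h ^+ 2); first by ring.
  rewrite ht; ring.
have vD' : v D = A.
  rewrite /D -addrA vstrict vN //.
  apply: (le_lt_trans (vD _ _)); rewrite gt_max expr2 !vM hx H2 -/T -/A.
  apply/andP; split; last nra.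
  have : 2^-1 * T * r <= A / 8 by rewrite -mulrA; lra.
  lra.
have D0 : D != 0.
  apply/eqP => /v_eq0 e; move: A0; by rewrite -vD' e ltxx.
have vN' : v Nm = r * A.
  rewrite /Nm vM hx vstrict; first by rewrite vM vN v3 mul1r.
  rewrite !vM vN v3 mul1r hx -/T -/A; lra.
have -> : fmap a x - - t = Nm / D.
  rewrite -NE -DE /fmap; field; by rewrite DE.
by rewrite vM vinv // vN' vD' -mulrA mulfV ?mulr1 // lt0r_neq0.
Qed.

End Aux.

Theorem theorem4p2 (K : closedFieldType) (R : rcfType) (v : K -> R)
  (HK : is_C2 v) (a : K) (ha : a != 0) (t1 t2 : K)
  (ht1 : t1 ^+ 2 = - (2 * a)) (ht2 : t2 = - t1) (r : R)
  (hr0 : 0 < r) (hr : r <= Num.sqrt (v a) / (2 * Num.sqrt 2)) :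
  (forall x : K, sphere v r t1 x -> ~ P2 a x -> sphere v r t2 (fmap a x)) /\
  (forall x : K, sphere v r t2 x -> ~ P2 a x -> sphere v r t1 (fmap a x)).
Proof.
case: HK => _ Hv _ H2.
split => x hx _; rewrite /sphere.
  by rewrite ht2; exact: (@key _ _ _ Hv H2 _ _ _ _ ha ht1 hr0 hr hx).
have ht2' : t2 ^+ 2 = - (2 * a) by rewrite ht2 sqrrN.
have -> : t1 = - t2 by rewrite ht2 opprK.
exact: (@key _ _ _ Hv H2 _ _ _ _ ha ht2' hr0 hr hx).
Qed.
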